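(* Let $\mathcal{X}=\prod_{r=1}^d\mathcal{Z}_r$ be a product of nonempty convex compact subsets of Euclidean spaces, $F$ an $L$-Lipschitz operator on $\mathcal{X}$ with components $F_r$, $B_F:=\max_r\sup_x\|F_r(x)\|_2$, and suppose the average $(\alpha,\ell,h)$-generalized Minty property with slackness $\gamma>0$ holds. Then after $T\in\mathbb{N}$ iterations of rescaled optimistic gradient descent with learning rate $\eta\le\frac14\sqrt{\frac{\ell}{h^3L^2+hB_F^2\alpha^2d}}$ there is an iterate $x^{(t)}$, $t\in\{1,\dots,T\}$, such that for every $x^\star\in\mathcal{X}$, $$\langle x^{(t)}-x^\star,F(x^{(t)})\rangle\le 2d\Big(\frac{\max_r D_{\mathcal{Z}_r}}{\eta\ell}+\frac{hB_F}{\ell}\Big)\sqrt{\frac{4\eta\gamma}{\ell}+\frac{2D_{\mathcal{X}}^2h}{\ell T}}.$$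
   Context: $D_{\mathcal{Y}}$ is the $\ell_2$ diameter of $\mathcal{Y}$. $\mathbf{1}_{\mathcal{Z}_r}$ is the indicator vector of the coordinates of $\mathcal{Z}_r$; $\circ$ is the coordinatewise product; vector inequalities are coordinatewise. $A(x)=\sum_r a_r(x)\mathbf{1}_{\mathcal{Z}_r}$ with each $a_r$ $\alpha$-Lipschitz and $0<\ell\le A(x)\le h$; $W(x)=\sum_r w_r(x)\mathbf{1}_{\mathcal{Z}_r}$ with $0<\ell\le W(x)\le h$. The average $(\alpha,\ell,h)$-generalized Minty property with slackness $\gamma$: for every $T$ and sequence $(x^{(t)})_{t\le T}$ in $\mathcal{X}$ there is $x^\star\in\mathcal{X}$ with $\frac1T\sum_{t=1}^T\langle x^{(t)}-x^\star,F(x^{(t)})\circ A(x^{(t)})\circ W(x^\star)\rangle\ge-\gamma$. Rescaled optimistic gradient descent: from arbitrary $x^{(0)}=\hat x^{(1)}\in\mathcal{X}$, $x^{(t)}=\Pi_{\mathcal{X}}(\hat x^{(t)}-\eta A(x^{(t-1)})\circ F(x^{(t-1)}))$, $\hat x^{(t+1)}=\Pi_{\mathcal{X}}(\hat x^{(t)}-\eta A(x^{(t)})\circ F(x^{(t)}))$ for $t\ge1$. *)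

(* Defs.v *)
From HB Require Import structures.
From mathcomp Require Import all_boot all_order all_algebra.
From mathcomp Require Import all_classical all_reals all_analysis.
Set Implicit Arguments. Unset Strict Implicit. Unset Printing Implicit Defensive.
Import Order.TTheory GRing.Theory Num.Theory.
Import numFieldNormedType.Exports.
Local Open Scope ring_scope.
Local Open Scope classical_set_scope.

(* The product
   X = prod_{r<d} Z_r is encoded by a block map blk : 'I_n -> 'I_d assigning
   each coordinate to its factor; Z_r lives in the coordinate subspace of
   block r (coordinates outside block r are zero). *)

Definition dotp (R : realType) n (u v : 'rV[R]_n) : R := \sum_i u ord0 i * v ord0 i.
Definition norm2 (R : realType) n (u : 'rV[R]_n) : R := Num.sqrt (dotp u u).

Definition hprod (R : realType) n (u v : 'rV[R]_n) : 'rV[R]_n :=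
  \row_i (u ord0 i * v ord0 i).

Definition ind (R : realType) n d (blk : 'I_n -> 'I_d) (r : 'I_d) : 'rV[R]_n :=
  \row_i (if blk i == r then 1 else 0).

Definition blockc (R : realType) n d (blk : 'I_n -> 'I_d) (r : 'I_d)
  (x : 'rV[R]_n) : 'rV[R]_n := hprod x (ind R blk r).

Definition blockfun (R : realType) n d (blk : 'I_n -> 'I_d)
  (c : 'I_d -> 'rV[R]_n -> R) (x : 'rV[R]_n) : 'rV[R]_n :=
  \sum_r c r x *: ind R blk r.

Definition in_block (R : realType) n d (blk : 'I_n -> 'I_d) (r : 'I_d)
  (Z : set 'rV[R]_n) : Prop :=
  forall z, Z z -> forall i, blk i != r -> z ord0 i = 0.

Definition prodset (R : realType) n d (blk : 'I_n -> 'I_d)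
  (Z : 'I_d -> set 'rV[R]_n) : set 'rV[R]_n :=
  [set x | forall r, Z r (blockc blk r x)].

Definition convex_Z (R : realType) n (Z : set 'rV[R]_n) : Prop :=
  forall x y, Z x -> Z y -> forall t : R, 0 <= t <= 1 ->
    Z (t *: x + (1 - t) *: y).

Definition diam2 (R : realType) n (Y : set 'rV[R]_n) : R :=
  sup [set e | exists x y, Y x /\ Y y /\ e = norm2 (x - y)].

Definition is_proj (R : realType) n (X : set 'rV[R]_n) (y p : 'rV[R]_n) : Prop :=
  X p /\ forall z, X z -> norm2 (y - p) <= norm2 (y - z).

Definition lip_on (R : realType) n (X : set 'rV[R]_n) (L : R)
  (F : 'rV[R]_n -> 'rV[R]_n) : Prop :=
  forall x y, X x -> X y -> norm2 (F x - F y) <= L * norm2 (x - y).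

Definition lip_scal_on (R : realType) n (X : set 'rV[R]_n) (a : R)
  (f : 'rV[R]_n -> R) : Prop :=
  forall x y, X x -> X y -> `|f x - f y| <= a * norm2 (x - y).

Definition BF (R : realType) n d (blk : 'I_n -> 'I_d) (X : set 'rV[R]_n)
  (F : 'rV[R]_n -> 'rV[R]_n) : R :=
  \big[Num.max/0]_(r < d) sup [set norm2 (blockc blk r (F x)) | x in X].

(* average (alpha,l,h)-generalized Minty property with slackness gamma,
   for the given A(x)=sum_r a_r(x)1_{Z_r}, W(x)=sum_r w_r(x)1_{Z_r} *)
Definition avg_minty (R : realType) n d (blk : 'I_n -> 'I_d) (X : set 'rV[R]_n)
  (F : 'rV[R]_n -> 'rV[R]_n) (a w : 'I_d -> 'rV[R]_n -> R)
  (alpha l h gamma : R) : Prop :=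
  [/\ 0 < l,
      forall r, lip_scal_on X alpha (a r),
      forall r x, X x -> l <= a r x <= h,
      forall r x, X x -> l <= w r x <= h &
      forall (T : nat) (xs : nat -> 'rV[R]_n),
        (forall t, (1 <= t <= T)%N -> X (xs t)) ->
        exists2 xs0, X xs0 &
          (T%:R)^-1 * \sum_(1 <= t < T.+1)
             dotp (xs t - xs0)
                  (hprod (hprod (F (xs t)) (blockfun blk a (xs t)))
                         (blockfun blk w xs0)) >= - gamma].

Definition rogd (R : realType) n d (blk : 'I_n -> 'I_d) (X : set 'rV[R]_n)
  (F : 'rV[R]_n -> 'rV[R]_n) (a : 'I_d -> 'rV[R]_n -> R) (eta : R)
  (x xh : nat -> 'rV[R]_n) : Prop :=
  [/\ X (x 0%N), xh 1%N = x 0%N &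
      forall t, (1 <= t)%N ->
        is_proj X (xh t - eta *: hprod (blockfun blk a (x t.-1)) (F (x t.-1))) (x t)
        /\ is_proj X (xh t - eta *: hprod (blockfun blk a (x t)) (F (x t))) (xh t.+1)].

(* Main.v *)
Require Import Defs.
From HB Require Import structures.
From mathcomp Require Import all_boot all_order all_algebra.
From mathcomp Require Import all_classical all_reals all_analysis.
From mathcomp Require Import ring lra.
Import Order.TTheory GRing.Theory Num.Theory.
Import numFieldNormedType.Exports.
Local Open Scope ring_scope.
Local Open Scope classical_set_scope.

Lemma bigmax_ge (R : realType) (I : finType) (f : I -> R) i :
  f i <= \big[Num.max/0]_(j : I) f j.
Proof.
have : i \in index_enum I by rewrite mem_index_enum.
elim: (index_enum I) => //= j s IH.
rewrite in_cons big_cons => /orP [/eqP->|/IH H].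
  by rewrite le_max lexx.
by rewrite le_max H orbT.
Qed.

Lemma bigmax_ge0 (R : realType) (I : finType) (f : I -> R) :
  0 <= \big[Num.max/0]_(j : I) f j.
Proof.
elim: (index_enum I) => [|j s IH]; first by rewrite big_nil.
by rewrite big_cons le_max IH orbT.
Qed.

Lemma CS (R : realType) (I : finType) (f g : I -> R) :
  \sum_i f i * g i <= Num.sqrt (\sum_i f i ^+ 2) * Num.sqrt (\sum_i g i ^+ 2).
Proof.
set A := \sum_i f i ^+ 2; set C := \sum_i g i ^+ 2; set B := \sum_i f i * g i.
have A0 : 0 <= A by apply: sumr_ge0 => i _; exact: sqr_ge0.
have C0 : 0 <= C by apply: sumr_ge0 => i _; exact: sqr_ge0.
have [Ae|Anz] := eqVneq A 0.
  have f0 : forall i, f i = 0.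
    move=> i; apply/eqP; rewrite -sqrf_eq0; apply/eqP.
    by apply: (psumr_eq0P (P := predT) (F := fun i => f i ^+ 2)) => // j _; exact: sqr_ge0.
  rewrite Ae /B big1 ?sqrtr0 ?mul0r // => i _; by rewrite f0 mul0r.
have [Ce|Cnz] := eqVneq C 0.
  have g0 : forall i, g i = 0.
    move=> i; apply/eqP; rewrite -sqrf_eq0; apply/eqP.
    by apply: (psumr_eq0P (P := predT) (F := fun i => g i ^+ 2)) => // j _; exact: sqr_ge0.
  rewrite Ce /B big1 ?sqrtr0 ?mulr0 // => i _; by rewrite g0 mulr0.
set a := Num.sqrt A; set c := Num.sqrt C.
have a2 : a ^+ 2 = A by rewrite sqr_sqrtr.
have c2 : c ^+ 2 = C by rewrite sqr_sqrtr.
have ap : 0 < a by rewrite sqrtr_gt0 lt_neqAle eq_sym Anz A0.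
have cp : 0 < c by rewrite sqrtr_gt0 lt_neqAle eq_sym Cnz C0.
have H : 0 <= \sum_i (c * f i - a * g i) ^+ 2 by apply: sumr_ge0 => i _; exact: sqr_ge0.
have E : \sum_i (c * f i - a * g i) ^+ 2 = c ^+ 2 * A + (- 2 * a * c) * B + a ^+ 2 * C.
  rewrite /A /B /C !mulr_sumr -!big_split /=; apply: eq_bigr => i _; ring.
rewrite E a2 c2 in H.
have acp : 0 < a * c by apply: mulr_gt0.
have : 2 * (a * c) * (a * c - B) >= 0.
  have -> : 2 * (a * c) * (a * c - B) = 2 * (a^+2 * c^+2) + (- 2 * a * c) * B by ring.
  rewrite a2 c2; lra.
rewrite pmulr_rge0 ?subr_ge0 //; lra.
Qed.

Lemma hprodE (R : realType) n (u v : 'rV[R]_n) i :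
  hprod u v ord0 i = u ord0 i * v ord0 i.
Proof. by rewrite /hprod mxE. Qed.

Lemma indE (R : realType) n d (blk : 'I_n -> 'I_d) r i :
  ind R blk r ord0 i = if blk i == r then 1 else 0.
Proof. by rewrite /ind mxE. Qed.

Lemma blockcE (R : realType) n d (blk : 'I_n -> 'I_d) r (x : 'rV[R]_n) i :
  blockc blk r x ord0 i = if blk i == r then x ord0 i else 0.
Proof. by rewrite /blockc hprodE indE; case: ifP => _; rewrite ?mulr1 ?mulr0. Qed.

Lemma blockfunE (R : realType) n d (blk : 'I_n -> 'I_d) c (x : 'rV[R]_n) i :
  blockfun blk c x ord0 i = c (blk i) x.
Proof.
rewrite /blockfun summxE (bigD1 (blk i)) //= mxE indE eqxx mulr1 big1 ?addr0 //.
by move=> r /negPf; rewrite mxE indE eq_sym => ->; rewrite mulr0.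
Qed.

Lemma sum_blocks {R : realType} {n d} (blk : 'I_n -> 'I_d) (f : 'I_n -> R) :
  \sum_i f i = \sum_r \sum_i (if blk i == r then f i else 0).
Proof.
rewrite exchange_big /=; apply: eq_bigr => i _.
rewrite (bigD1 (blk i)) //= eqxx big1 ?addr0 //.
by move=> r /negPf; rewrite eq_sym => ->.
Qed.

Lemma dotp_ge0 (R : realType) n (u : 'rV[R]_n) : 0 <= dotp u u.
Proof. by apply: sumr_ge0 => i _; rewrite -expr2; exact: sqr_ge0. Qed.

Lemma norm2_sq (R : realType) n (u : 'rV[R]_n) : norm2 u ^+ 2 = dotp u u.
Proof. by rewrite /norm2 sqr_sqrtr // dotp_ge0. Qed.

Lemma norm2_ge0 (R : realType) n (u : 'rV[R]_n) : 0 <= norm2 u.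
Proof. exact: sqrtr_ge0. Qed.

Lemma norm2_le_sq {R : realType} {n} {u : 'rV[R]_n} {K : R} :
  norm2 u <= K -> dotp u u <= K ^+ 2.
Proof.
move=> H; have K0 : 0 <= K by apply: le_trans H; exact: norm2_ge0.
by rewrite -norm2_sq lerXn2r // ?nnegrE ?norm2_ge0.
Qed.

Lemma proj_block_VI (R : realType) n d (blk : 'I_n -> 'I_d)
  (Z : 'I_d -> set 'rV[R]_n) (Hconv : forall r, convex_Z (Z r))
  (y p z : 'rV[R]_n) r :
  is_proj (prodset blk Z) y p -> prodset blk Z z ->
  \sum_i (if blk i == r then (y ord0 i - p ord0 i) * (z ord0 i - p ord0 i) else 0) <= 0.
Proof.
move=> [Hp Hmin] Hz.
set e : 'rV[R]_n := \row_i (if blk i == r then z ord0 i - p ord0 i else 0).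
set A := \sum_i _.
set E := \sum_i (e ord0 i) ^+ 2.
have E0 : 0 <= E by apply: sumr_ge0 => i _; exact: sqr_ge0.
have key : forall t : R, 0 < t <= 1 -> 2 * A <= t * E.
  move=> t /andP [t0 t1].
  have Xq : prodset blk Z (p + t *: e).
    move=> s; have [<-|nsr] := eqVneq r s.
      have -> : blockc blk r (p + t *: e) = t *: blockc blk r z + (1 - t) *: blockc blk r p.
        apply/rowP => i; rewrite !blockcE !mxE; case: (blk i == r); ring.
      by apply: Hconv; [exact: Hz|exact: Hp|rewrite (ltW t0) t1].
    have -> : blockc blk s (p + t *: e) = blockc blk s p.
      apply/rowP => i; rewrite !blockcE !mxE; case: ifP => // /eqP bs.
      have -> : (blk i == r) = false by apply/negbTE; rewrite bs eq_sym.
      by rewrite mulr0 addr0.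
    exact: Hp.
  have := Hmin _ Xq; rewrite /norm2 ler_sqrt ?dotp_ge0 //.
  have -> : dotp (y - (p + t *: e)) (y - (p + t *: e)) =
     dotp (y - p) (y - p) + (- 2 * t) * A + t ^+ 2 * E.
    rewrite /dotp /A /E !mulr_sumr -!big_split /=; apply: eq_bigr => i _.
    rewrite !mxE; case: (blk i == r); ring.
  move=> H.
  have : 0 <= t * (t * E - 2 * A).
    have -> : t * (t * E - 2 * A) = t ^+ 2 * E + (- 2 * t) * A by ring.
    lra.
  by rewrite pmulr_rge0 // subr_ge0.
have [A0|Apos] := leP A 0; first by [].
have := key (A / (A + E)).
have AE : 0 < A + E by lra.
rewrite divr_gt0 // ler_pdivrMr // mul1r lerDl E0 => /(_ isT).
rewrite mulrAC ler_pdivlMr //.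
move=> H; nra.
Qed.
Lemma step_abs (R : realType) n (c : 'I_n -> R) (eta : R)
  (xt xh xh1 z g gp xp : 'I_n -> R) :
  (forall i, 0 <= c i) ->
  \sum_i c i * ((xh i - eta * gp i - xt i) * (xh1 i - xt i)) <= 0 ->
  \sum_i c i * ((xh i - eta * g i - xh1 i) * (z i - xh1 i)) <= 0 ->
  \sum_i c i * ((xh i - eta * g i - xh1 i) * (xt i - xh1 i)) <= 0 ->
  eta ^+ 2 * \sum_i c i * (g i - gp i) ^+ 2 <=
    4^-1 * (\sum_i c i * (xt i - xh i) ^+ 2 + \sum_i c i * (xp i - xh i) ^+ 2) ->
  eta * \sum_i c i * (g i * (xt i - z i))
    + 4^-1 * \sum_i c i * (xt i - xh i) ^+ 2
    + 4^-1 * \sum_i c i * (xt i - xh1 i) ^+ 2 <=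
  (2^-1 * \sum_i c i * (xh i - z i) ^+ 2 + 4^-1 * \sum_i c i * (xp i - xh i) ^+ 2)
  - (2^-1 * \sum_i c i * (xh1 i - z i) ^+ 2 + 4^-1 * \sum_i c i * (xt i - xh1 i) ^+ 2).
Proof.
move=> c0.
set V1 := \sum_i c i * ((xh i - eta * gp i - xt i) * (xh1 i - xt i)).
set V2 := \sum_i c i * ((xh i - eta * g i - xh1 i) * (z i - xh1 i)).
set V3 := \sum_i c i * ((xh i - eta * g i - xh1 i) * (xt i - xh1 i)).
set Nn := \sum_i c i * (g i - gp i) ^+ 2.
set P := \sum_i c i * ((g i - gp i) * (xt i - xh1 i)).
set a2 := \sum_i c i * (xt i - xh i) ^+ 2.
set b2 := \sum_i c i * (xt i - xh1 i) ^+ 2.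
set p2 := \sum_i c i * (xp i - xh i) ^+ 2.
set Gz := \sum_i c i * (g i * (xt i - z i)).
set Phi := \sum_i c i * (xh i - z i) ^+ 2.
set Phi1 := \sum_i c i * (xh1 i - z i) ^+ 2.
move=> H1 H2 H3 HN.
have E1 : b2 = eta * P + V1 + V3.
  rewrite /b2 /P /V1 /V3 !mulr_sumr -!big_split /=; apply: eq_bigr => i _; ring.
have Y : eta * P <= 2^-1 * (eta ^+ 2 * Nn) + 2^-1 * b2.
  rewrite /P /Nn /b2 !mulr_sumr -!big_split /=; apply: ler_sum => i _.
  have := c0 i; have := sqr_ge0 (eta * (g i - gp i) - (xt i - xh1 i)); nra.
have E2 : eta * Gz = 2^-1 * Phi + (-2^-1) * Phi1 + (-2^-1) * b2 + (-2^-1) * a2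
   + eta * P + V1 + V2.
  rewrite /Gz /Phi /Phi1 /b2 /a2 /P /V1 /V2 !mulr_sumr -!big_split /=.
  by apply: eq_bigr => i _; field.
lra.
Qed.

Lemma Nbound (R : realType) n d (blk : 'I_n -> 'I_d) (a : 'I_d -> 'rV[R]_n -> R)
  (F : 'rV[R]_n -> 'rV[R]_n) (c : 'I_n -> R) (xt xp xh : 'rV[R]_n)
  (eta l h L alpha B : R) :
  0 < l -> 0 <= h -> (forall i, l <= c i <= h) -> (forall r, l <= a r xt <= h) ->
  (forall r, `|a r xt - a r xp| <= alpha * norm2 (xt - xp)) ->
  norm2 (F xt - F xp) <= L * norm2 (xt - xp) ->
  (forall r, norm2 (blockc blk r (F xp)) <= B) ->
  16 * eta ^+ 2 * (h ^+ 3 * L ^+ 2 + h * B ^+ 2 * alpha ^+ 2 * d%:R) <= l ->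
  eta ^+ 2 * \sum_i c i * (a (blk i) xt * F xt ord0 i - a (blk i) xp * F xp ord0 i) ^+ 2
  <= 4^-1 * (\sum_i c i * (xt ord0 i - xh ord0 i) ^+ 2
             + \sum_i c i * (xp ord0 i - xh ord0 i) ^+ 2).
Proof.
move=> l0 h0 hc ha hda hdF hB heta.
set Q := _ + _.
set E := dotp (xt - xp) (xt - xp).
set EF := dotp (F xt - F xp) (F xt - F xp).
have E0 : 0 <= E by exact: dotp_ge0.
have HEF : EF <= L ^+ 2 * E.
  by have := norm2_le_sq hdF; rewrite exprMn norm2_sq.
have HQ : l * E <= 2 * Q.
  rewrite /E /Q /dotp mulrDr !mulr_sumr -big_split /=; apply: ler_sum => i _.
  rewrite !mxE.
  have /andP [c1 c2] := hc i.
  set u := xt ord0 i - xh ord0 i; set v := xp ord0 i - xh ord0 i.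
  have -> : xt ord0 i + - xp ord0 i = u - v by rewrite /u /v; ring.
  have := mulr_ge0 (ltW l0) (sqr_ge0 (u + v)).
  have : l * u ^+ 2 <= c i * u ^+ 2 by apply: ler_wpM2r => //; exact: sqr_ge0.
  have : l * v ^+ 2 <= c i * v ^+ 2 by apply: ler_wpM2r => //; exact: sqr_ge0.
  rewrite -!expr2 /=.
  have -> : l * (u - v) ^+ 2 = 2 * (l * u^+2) + 2 * (l * v^+2) - l * (u+v)^+2 by ring.
  lra.
have HS1 : \sum_i c i * (a (blk i) xt * F xt ord0 i - a (blk i) xp * F xp ord0 i) ^+ 2
   <= h * (2 * h ^+ 2 * EF + 2 * \sum_i (a (blk i) xt - a (blk i) xp) ^+ 2 * F xp ord0 i ^+ 2).
  rewrite /EF /dotp !mulr_sumr -big_split /= mulr_sumr; apply: ler_sum => i _.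
  rewrite !mxE.
  have /andP [c1 c2] := hc i; have /andP [a1 a2] := ha (blk i).
  move: a1 a2; set at_ := a (blk i) xt; set ap := a (blk i) xp => a1 a2.
  set ft := F xt ord0 i; set fp := F xp ord0 i.
  have -> : at_ * ft - ap * fp = at_ * (ft - fp) + (at_ - ap) * fp by ring.
  set u := ft - fp; set v := at_ - ap.
  have hu : (at_ * u + v * fp) ^+ 2 <= 2 * h ^+ 2 * u ^+ 2 + 2 * (v ^+ 2 * fp ^+ 2).
    have ha2 : at_ ^+ 2 <= h ^+ 2 by rewrite lerXn2r // ?nnegrE; lra.
    have H1 := mulr_ge0 (sqr_ge0 u) (eqbRL (subr_ge0 _ _) ha2).
    have H2 := sqr_ge0 (at_ * u - v * fp).
    have -> : (at_ * u + v * fp) ^+ 2 = 2 * (at_ ^+ 2 * u ^+ 2) + 2 * (v ^+ 2 * fp ^+ 2) - (at_ * u - v * fp) ^+ 2 by ring.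
    have e2 : u ^+ 2 * (h ^+ 2 - at_ ^+ 2) = h ^+ 2 * u ^+ 2 - at_ ^+ 2 * u ^+ 2 by ring.
    rewrite e2 in H1. lra.
  have hc' : c i * (at_ * u + v * fp) ^+ 2 <= h * (at_ * u + v * fp) ^+ 2.
    by apply: ler_wpM2r => //; exact: sqr_ge0.
  apply: (le_trans hc'); apply: ler_wpM2l => //.
have HS2 : \sum_i (a (blk i) xt - a (blk i) xp) ^+ 2 * F xp ord0 i ^+ 2
   <= d%:R * (alpha ^+ 2 * E * B ^+ 2).
  rewrite (sum_blocks blk).
  have -> : d%:R * (alpha ^+ 2 * E * B ^+ 2) = \sum_(r < d) (alpha ^+ 2 * E * B ^+ 2).
    by rewrite sumr_const card_ord mulr_natl.
  apply: ler_sum => r _.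
  have -> : \sum_i (if blk i == r then (a (blk i) xt - a (blk i) xp) ^+ 2 * F xp ord0 i ^+ 2 else 0)
     = (a r xt - a r xp) ^+ 2 * dotp (blockc blk r (F xp)) (blockc blk r (F xp)).
    rewrite /dotp mulr_sumr; apply: eq_bigr => i _; rewrite blockcE.
    by case: eqP => [->|_]; rewrite ?mulr0 // expr2.
  apply: ler_pM; [exact: sqr_ge0|exact: dotp_ge0| |exact: norm2_le_sq].
  have := hda r => H.
  have : 0 <= alpha * norm2 (xt - xp) by apply: le_trans H.
  move=> H0.
  have := lerXn2r 2 (normr_ge0 _) H0 H.
  by rewrite ?nnegrE real_normK ?num_real // exprMn norm2_sq.
set S2 := \sum_i (a (blk i) xt - a (blk i) xp) ^+ 2 * F xp ord0 i ^+ 2 in HS1 HS2.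
set SG := \sum_i c i * _ in HS1 *.
have hh := mulr_ge0 h0 (sqr_ge0 h).
have p1 := ler_wpM2l hh HEF.
have p2 := ler_wpM2l h0 HS2.
have K1 : SG <= 2 * E * (h ^+ 3 * L ^+ 2 + h * B ^+ 2 * alpha ^+ 2 * d%:R).
  apply: (le_trans HS1).
  have -> : h * (2 * h ^+ 2 * EF + 2 * S2) = 2 * (h * h ^+ 2 * EF) + 2 * (h * S2) by ring.
  have -> : 2 * E * (h ^+ 3 * L ^+ 2 + h * B ^+ 2 * alpha ^+ 2 * d%:R) =
     2 * (h * h ^+ 2 * (L ^+ 2 * E)) + 2 * (h * (d%:R * (alpha ^+ 2 * E * B ^+ 2))) by ring.
  lra.
have p3 := ler_wpM2r E0 heta.
have p4 := ler_wpM2l (sqr_ge0 eta) K1.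
lra.
Qed.

Lemma proj_VI_w (R : realType) n d (blk : 'I_n -> 'I_d)
  (Z : 'I_d -> set 'rV[R]_n) (Hconv : forall r, convex_Z (Z r))
  (c : 'I_d -> R) (hc : forall r, 0 <= c r) (y p z : 'rV[R]_n) :
  is_proj (prodset blk Z) y p -> prodset blk Z z ->
  \sum_i c (blk i) * ((y ord0 i - p ord0 i) * (z ord0 i - p ord0 i)) <= 0.
Proof.
move=> Hp Hz; rewrite (sum_blocks blk); apply: sumr_le0 => r _.
have -> : \sum_i (if blk i == r then c (blk i) * ((y ord0 i - p ord0 i) * (z ord0 i - p ord0 i)) else 0)
  = c r * \sum_i (if blk i == r then (y ord0 i - p ord0 i) * (z ord0 i - p ord0 i) else 0).
  rewrite mulr_sumr; apply: eq_bigr => i _; case: eqP => [->|_] //; by rewrite mulr0.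
by apply: mulr_ge0_le0 => //; exact: proj_block_VI.
Qed.

Lemma ex_min_nat {R : realType} {f : nat -> R} {T} : (1 <= T)%N ->
  exists t, (1 <= t <= T)%N /\ forall s, (1 <= s <= T)%N -> f t <= f s.
Proof.
elim: T => [//|T IH] _.
have [T0|Tp] := posnP T.
  exists 1%N; rewrite T0; split => // s /andP [s1 s2].
  by have -> : s = 1%N by apply/eqP; rewrite eqn_leq s1 s2.
have [t [/andP [t1 t2] Ht]] := IH Tp.
have [le|lt] := leP (f t) (f T.+1).
  exists t; split; first by rewrite t1 (leq_trans t2).
  move=> s /andP [s1]; rewrite leq_eqVlt => /orP [/eqP ->//|].
  by rewrite ltnS => s2; apply: Ht; rewrite s1 s2.
exists T.+1; split; first by rewrite leqnn.
move=> s /andP [s1]; rewrite leq_eqVlt => /orP [/eqP ->//|].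
rewrite ltnS => s2; apply: le_trans (ltW lt) _; apply: Ht; by rewrite s1 s2.
Qed.

Lemma pigeon (R : realType) (f : nat -> R) T : (1 <= T)%N ->
  exists2 t, (1 <= t <= T)%N & T%:R * f t <= \sum_(1 <= s < T.+1) f s.
Proof.
move=> T1; have [t [Ht Hm]] := (@ex_min_nat R f T T1).
exists t => //.
have -> : T%:R * f t = \sum_(1 <= s < T.+1) f t.
  by rewrite sumr_const_nat subSS subn0 mulr_natl.
apply: ler_sum_nat => s /andP [s1 s2]; apply: Hm; by rewrite s1 -ltnS.
Qed.

Lemma entry_bound (R : realType) n (u : 'rV[R]_n) i : `|u ord0 i| <= `|u|.
Proof.
have -> : `|u| = \big[Num.max/0]_ij `|u ij.1 ij.2| by rewrite -mx_normrE.
exact: (@bigmax_ge R _ (fun ij : 'I_1 * 'I_n => `|u ij.1 ij.2|) (ord0, i)).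
Qed.

Lemma compact_entry (R : realType) n (A : set 'rV[R]_n) : compact A ->
  exists M, forall z, A z -> forall i, `|z ord0 i| <= M.
Proof.
move=> /compact_bounded [M [_ HM]].
exists (M + 1) => z Az i; apply: le_trans (entry_bound _ _ z i) _.
by apply: (HM (M + 1)) => //; rewrite ltrDl.
Qed.

Lemma norm2_entry (R : realType) n (u : 'rV[R]_n) (K : 'I_n -> R) :
  (forall i, `|u ord0 i| <= K i) -> norm2 u <= Num.sqrt (\sum_i K i ^+ 2).
Proof.
move=> H; rewrite /norm2 ler_sqrt; last by apply: sumr_ge0 => i _; exact: sqr_ge0.
apply: ler_sum => i _; rewrite -expr2 -real_normK ?num_real //.
by rewrite lerXn2r // nnegrE // (le_trans _ (H i)).
Qed.

Lemma diam_ge (R : realType) n (Y : set 'rV[R]_n) (M : R) :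
  (forall x y, Y x -> Y y -> norm2 (x - y) <= M) ->
  forall x y, Y x -> Y y -> norm2 (x - y) <= diam2 Y.
Proof.
move=> HM x y Hx Hy; apply: ub_le_sup; last by exists x, y.
by exists M => e [x' [y' [Hx' [Hy' ->]]]]; exact: HM.
Qed.

Lemma BF_ge (R : realType) n d (blk : 'I_n -> 'I_d) (X : set 'rV[R]_n)
  (F : 'rV[R]_n -> 'rV[R]_n) (M : R) :
  (forall x, X x -> forall r, norm2 (blockc blk r (F x)) <= M) ->
  forall x r, X x -> norm2 (blockc blk r (F x)) <= BF blk X F.
Proof.
move=> HM x r Hx.
apply: le_trans (@bigmax_ge R _ (fun r => sup [set norm2 (blockc blk r (F x)) | x in X]) r).
apply: ub_le_sup; last by exists x.
by exists M => _ [x' Hx' <-]; exact: HM.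
Qed.

Lemma BF_ge0 (R : realType) n d (blk : 'I_n -> 'I_d) (X : set 'rV[R]_n)
  (F : 'rV[R]_n -> 'rV[R]_n) : 0 <= BF blk X F.
Proof. exact: bigmax_ge0. Qed.

Lemma ifsum_le (R : realType) n d (blk : 'I_n -> 'I_d) r (f : 'I_n -> R) :
  (forall i, 0 <= f i) -> \sum_i (if blk i == r then f i else 0) <= \sum_i f i.
Proof. by move=> f0; apply: ler_sum => i _; case: ifP. Qed.

Lemma gap_bound (R : realType) n d (blk : 'I_n -> 'I_d)
  (Z : 'I_d -> set 'rV[R]_n) (Hconv : forall r, convex_Z (Z r))
  (F : 'rV[R]_n -> 'rV[R]_n) (a : 'I_d -> 'rV[R]_n -> R)
  (eta l h B Dm S : R) (xt xh xh1 : 'rV[R]_n) (Dr : 'I_d -> R) :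
  0 < eta -> 0 < l -> 0 <= B -> 0 <= Dm -> 0 <= S ->
  (forall r, l <= a r xt <= h) ->
  (forall r, norm2 (blockc blk r (F xt)) <= B) ->
  (forall r z1 z2, Z r z1 -> Z r z2 -> norm2 (z1 - z2) <= Dr r) ->
  (forall r, Dr r <= Dm) ->
  is_proj (prodset blk Z) (xh - eta *: hprod (blockfun blk a xt) (F xt)) xh1 ->
  dotp (xt - xh) (xt - xh) + dotp (xt - xh1) (xt - xh1) <= S ->
  forall z, prodset blk Z z ->
  dotp (xt - z) (F xt) <= 2 * d%:R * (Dm / (eta * l) + h * B / l) * Num.sqrt S.
Proof.
move=> eta0 l0 B0 Dm0 S0 ha hB hD hDm Hp HS z Hz.
have Hxh1 := Hp.1.
rewrite /dotp (sum_blocks blk).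
have -> : 2 * d%:R * (Dm / (eta * l) + h * B / l) * Num.sqrt S =
   \sum_(r < d) (2 * (Dm / (eta * l) + h * B / l) * Num.sqrt S).
  by rewrite sumr_const card_ord -mulr_natl; ring.
apply: ler_sum => r _.
have /andP [ar1 ar2] := ha r.
have hl : l <= h by apply: le_trans ar2.
have VI := @proj_block_VI R n d blk Z Hconv _ _ z r Hp Hz.
set P1 := \sum_i (if blk i == r then F xt ord0 i * (xh1 ord0 i - z ord0 i) else 0).
set P2 := \sum_i (if blk i == r then F xt ord0 i * (xt ord0 i - xh1 ord0 i) else 0).
set W := \sum_i (if blk i == r then (xh ord0 i - xh1 ord0 i) * (xh1 ord0 i - z ord0 i) else 0).
have Esplit : \sum_i (if blk i == r then (xt - z) ord0 i * F xt ord0 i else 0) = P1 + P2.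
  rewrite /P1 /P2 -big_split /=; apply: eq_bigr => i _; rewrite !mxE.
  case: ifP => _; [ring | by rewrite addr0].
rewrite Esplit.
have E1 : \sum_i (if blk i == r then
      ((xh - eta *: hprod (blockfun blk a xt) (F xt)) ord0 i - xh1 ord0 i) *
      (z ord0 i - xh1 ord0 i) else 0) = eta * a r xt * P1 - W.
  rewrite /P1 /W mulr_sumr -sumrB; apply: eq_bigr => i _.
  rewrite !mxE ?hprodE ?blockfunE.
  case: eqP => [->|_]; [ring | by rewrite mulr0 subr0].
rewrite E1 in VI.
have CS1 : W <= Num.sqrt (\sum_i (if blk i == r then xh ord0 i - xh1 ord0 i else 0) ^+ 2)
   * Num.sqrt (\sum_i (if blk i == r then xh1 ord0 i - z ord0 i else 0) ^+ 2).
  have -> : W = \sum_i (if blk i == r then xh ord0 i - xh1 ord0 i else 0) *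
            (if blk i == r then xh1 ord0 i - z ord0 i else 0).
    by apply: eq_bigr => i _; case: ifP => _; rewrite ?mulr0.
  exact: (@CS R _ (fun i => if blk i == r then xh ord0 i - xh1 ord0 i else 0)
                (fun i => if blk i == r then xh1 ord0 i - z ord0 i else 0)).
have A1 : \sum_i (if blk i == r then xh ord0 i - xh1 ord0 i else 0) ^+ 2 <= 2 * S.
  have A1a : \sum_i (if blk i == r then xh ord0 i - xh1 ord0 i else 0) ^+ 2 <=
     \sum_i (xh ord0 i - xh1 ord0 i) ^+ 2.
    by apply: ler_sum => i _; case: ifP => _; rewrite ?expr0n ?sqr_ge0.
  have A1b : \sum_i (xh ord0 i - xh1 ord0 i) ^+ 2 <=
     2 * (dotp (xt - xh) (xt - xh) + dotp (xt - xh1) (xt - xh1)).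
    rewrite /dotp -big_split mulr_sumr; apply: ler_sum => i _; rewrite !mxE.
    have := sqr_ge0 (xh ord0 i + xh1 ord0 i - 2 * xt ord0 i).
    have -> : 2 * ((xt ord0 i + - xh ord0 i) * (xt ord0 i + - xh ord0 i) +
       (xt ord0 i + - xh1 ord0 i) * (xt ord0 i + - xh1 ord0 i)) =
       (xh ord0 i - xh1 ord0 i) ^+ 2 + (xh ord0 i + xh1 ord0 i - 2 * xt ord0 i) ^+ 2 by ring.
    lra.
  lra.
have A2 : Num.sqrt (\sum_i (if blk i == r then xh1 ord0 i - z ord0 i else 0) ^+ 2) <= Dm.
  have -> : \sum_i (if blk i == r then xh1 ord0 i - z ord0 i else 0) ^+ 2 =
     dotp (blockc blk r xh1 - blockc blk r z) (blockc blk r xh1 - blockc blk r z).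
    rewrite /dotp; apply: eq_bigr => i _; rewrite !mxE.
    by case: ifP => _; rewrite ?mulr1 ?mulr0 ?subr0 ?expr2 ?mulr0.
  apply: le_trans (hDm r); exact: hD (Hxh1 r) (Hz r).
have W1 : W <= Num.sqrt (2 * S) * Dm.
  apply: le_trans CS1 _; apply: ler_pM => //; try exact: sqrtr_ge0.
  by rewrite ler_sqrt // mulr_ge0.
have CS2 : P2 <= Num.sqrt (\sum_i (if blk i == r then F xt ord0 i else 0) ^+ 2)
   * Num.sqrt (\sum_i (if blk i == r then xt ord0 i - xh1 ord0 i else 0) ^+ 2).
  have -> : P2 = \sum_i (if blk i == r then F xt ord0 i else 0) *
            (if blk i == r then xt ord0 i - xh1 ord0 i else 0).
    by apply: eq_bigr => i _; case: ifP => _; rewrite ?mulr0.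
  exact: (@CS R _ (fun i => if blk i == r then F xt ord0 i else 0)
                (fun i => if blk i == r then xt ord0 i - xh1 ord0 i else 0)).
have B1 : Num.sqrt (\sum_i (if blk i == r then F xt ord0 i else 0) ^+ 2) <= B.
  apply: le_trans (hB r); rewrite /norm2 ler_sqrt ?dotp_ge0 //.
  rewrite /dotp le_eqVlt; apply/orP; left; apply/eqP; apply: eq_bigr => i _.
  by rewrite blockcE; case: ifP => _; rewrite ?expr2 ?mulr0.
have B2 : Num.sqrt (\sum_i (if blk i == r then xt ord0 i - xh1 ord0 i else 0) ^+ 2) <= Num.sqrt S.
  rewrite ler_sqrt //.
  have B2a : dotp (xt - xh1) (xt - xh1) <= S.
    by apply: le_trans HS; rewrite lerDr dotp_ge0.
  apply: le_trans B2a.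
  by rewrite /dotp; apply: ler_sum => i _; rewrite !mxE; case: ifP => _; rewrite ?expr0n ?sqr_ge0 // expr2.
have P2b : P2 <= B * Num.sqrt S.
  apply: le_trans CS2 _; apply: ler_pM => //; exact: sqrtr_ge0.
set q := Dm / (eta * l).
have q0 : 0 <= q by apply: divr_ge0 => //; apply: mulr_ge0; apply: ltW.
have Dmq : Dm = eta * l * q by rewrite /q mulrCA divff ?mulr1 // mulf_neq0 // lt0r_neq0.
have sS := sqrtr_ge0 S.
have s2 : Num.sqrt 2 <= 2 :> R.
  have e4 : Num.sqrt (2 ^+ 2) = 2 :> R by rewrite sqrtr_sqr ger0_norm.
  rewrite -[X in _ <= X]e4 ler_sqrt ?sqr_ge0 //; lra.
have s2S : Num.sqrt (2 * S) <= 2 * Num.sqrt S.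
  by rewrite sqrtrM //; apply: ler_wpM2r.
have P1b : P1 <= 2 * Num.sqrt S * q.
  have etaa : eta * l * P1 <= eta * a r xt * P1 \/ P1 <= 0.
    have [P1n|P1p] := leP P1 0; first by right.
    left; apply: ler_wpM2r; first exact: ltW.
    by apply: ler_wpM2l => //; exact: ltW.
  have WW : W <= 2 * Num.sqrt S * (eta * l * q).
    apply: (le_trans W1); rewrite -Dmq; apply: ler_wpM2r => //.
  have el : 0 < eta * l by apply: mulr_gt0.
  have q2 : 0 <= 2 * Num.sqrt S * q by apply: mulr_ge0 => //; apply: mulr_ge0.
  case: etaa => [H|H]; last by apply: le_trans H q2.
  have : eta * l * P1 <= eta * l * (2 * Num.sqrt S * q).
    have e : 2 * Num.sqrt S * (eta * l * q) = eta * l * (2 * Num.sqrt S * q) by ring.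
    rewrite -e; lra.
  by rewrite ler_pM2l.
have hBB : B <= h * B / l.
  rewrite ler_pdivlMr // mulrC; apply: ler_wpM2r => //.
have P2c : P2 <= 2 * (h * B / l) * Num.sqrt S.
  apply: (le_trans P2b).
  have := ler_wpM2r sS hBB.
  have := mulr_ge0 (mulr_ge0 (le_trans B0 hBB) sS).
  nra.
have -> : 2 * (q + h * B / l) * Num.sqrt S = 2 * Num.sqrt S * q + 2 * (h * B / l) * Num.sqrt S by ring.
lra.
Qed.

Lemma proj_VI_e (R : realType) n d (blk : 'I_n -> 'I_d)
  (Z : 'I_d -> set 'rV[R]_n) (Hconv : forall r, convex_Z (Z r))
  (c : 'I_d -> R) (hc : forall r, 0 <= c r) (a : 'I_d -> 'rV[R]_n -> R)
  (F : 'rV[R]_n -> 'rV[R]_n) (eta : R) (xh y p z : 'rV[R]_n) :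
  is_proj (prodset blk Z) (xh - eta *: hprod (blockfun blk a y) (F y)) p ->
  prodset blk Z z ->
  \sum_i c (blk i) * ((xh ord0 i - eta * (a (blk i) y * F y ord0 i) - p ord0 i)
                      * (z ord0 i - p ord0 i)) <= 0.
Proof.
move=> Hp Hz.
have H := @proj_VI_w R n d blk Z Hconv c hc _ _ _ Hp Hz.
apply: le_trans H; rewrite le_eqVlt; apply/orP; left; apply/eqP.
by apply: eq_bigr => i _; rewrite !mxE ?hprodE ?blockfunE.
Qed.

Lemma F_bounded (R : realType) n d (blk : 'I_n -> 'I_d) (X : set 'rV[R]_n)
  (F : 'rV[R]_n -> 'rV[R]_n) (L : R) (x0 : 'rV[R]_n) (C : R) :
  lip_on X L F -> X x0 -> (forall y, X y -> dotp (y - x0) (y - x0) <= C) ->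
  forall y, X y -> forall r,
  norm2 (blockc blk r (F y)) <= Num.sqrt (2 * dotp (F x0) (F x0) + 2 * (L ^+ 2 * C)).
Proof.
move=> HL HX0 HC y Hy r.
rewrite /norm2 ler_sqrt; last first.
  apply: addr_ge0; apply: mulr_ge0 => //; [exact: dotp_ge0|apply: mulr_ge0 => //].
    exact: sqr_ge0.
  by apply: le_trans (HC _ HX0); exact: dotp_ge0.
have h1 : dotp (blockc blk r (F y)) (blockc blk r (F y)) <= dotp (F y) (F y).
  apply: ler_sum => i _; rewrite blockcE; case: ifP => _; rewrite ?mulr0 //.
  by rewrite -expr2 sqr_ge0.
have h2 : dotp (F y) (F y) <= 2 * dotp (F x0) (F x0) + 2 * dotp (F y - F x0) (F y - F x0).
  rewrite /dotp !mulr_sumr -big_split; apply: ler_sum => i _; rewrite !mxE.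
  have := sqr_ge0 (F y ord0 i - 2 * F x0 ord0 i); rewrite expr2 /=; nra.
have h3 : dotp (F y - F x0) (F y - F x0) <= L ^+ 2 * C.
  have := norm2_le_sq (HL _ _ Hy HX0); rewrite exprMn norm2_sq => H.
  apply: (le_trans H); apply: ler_wpM2l; [exact: sqr_ge0|exact: HC].
lra.
Qed.

Theorem corollary3 (R : realType) (n d : nat) (blk : 'I_n -> 'I_d)
  (Z : 'I_d -> set 'rV[R]_n)
  (HZblk : forall r, in_block blk r (Z r))
  (HZne : forall r, Z r !=set0)
  (HZconv : forall r, convex_Z (Z r))
  (HZcpt : forall r, @compact 'rV[R]_n (Z r))
  (F : 'rV[R]_n -> 'rV[R]_n) (L : R)
  (HF : lip_on (prodset blk Z) L F)
  (a w : 'I_d -> 'rV[R]_n -> R) (alpha l h gamma : R)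
  (Hgamma : 0 < gamma)
  (Hminty : avg_minty blk (prodset blk Z) F a w alpha l h gamma)
  (eta : R) (Heta0 : 0 < eta)
  (Heta : 16 * eta ^+ 2 * (h ^+ 3 * L ^+ 2
              + h * BF blk (prodset blk Z) F ^+ 2 * alpha ^+ 2 * d%:R) <= l)
  (x xh : nat -> 'rV[R]_n)
  (Hrun : rogd blk (prodset blk Z) F a eta x xh)
  (T : nat) (HT : (1 <= T)%N) :
  exists2 t : nat, (1 <= t <= T)%N &
    forall xs : 'rV[R]_n, prodset blk Z xs ->
      dotp (x t - xs) (F (x t)) <=
        2 * d%:R * ((\big[Num.max/0]_(r < d) diam2 (Z r)) / (eta * l)
                    + h * BF blk (prodset blk Z) F / l)
        * Num.sqrt (4 * eta * gamma / l
                    + 2 * diam2 (prodset blk Z) ^+ 2 * h / (l * T%:R)).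
Proof.
move: Hminty => [Hl Halip Hab Hwb Hm].
move: Hrun => [HX0 Hxh1 Hstep].
have [d0|dpos] := posnP d.
  exists 1%N; first by rewrite HT.
  move=> xs _; have -> : d%:R = 0 :> R by rewrite d0.
  rewrite mulr0 !mul0r /dotp (sum_blocks blk) big1 // => r _.
  by have := ltn_ord r; rewrite {2}d0.
have HXx : forall t, prodset blk Z (x t).
  by case=> [|t] //; exact: (Hstep t.+1 isT).1.1.
have HXh : forall t, (1 <= t)%N -> prodset blk Z (xh t).
  case=> [//|[|t]] _; first by rewrite Hxh1.
  exact: (Hstep t.+1 isT).2.1.
have hl : l <= h.
  by have /andP [h1 h2] := Hab (Ordinal dpos) (x 0%N) HX0; apply: le_trans h2.
have h0 : 0 <= h by apply: le_trans hl; exact: ltW.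
have [Mf HMf] : exists Mf : 'I_d -> R, forall r z, Z r z -> forall i, `|z ord0 i| <= Mf r.
  apply: (@fin_all_exists _ (fun _ => R)
    (fun r M => forall z, Z r z -> forall i, `|z ord0 i| <= M)) => r.
  exact: (@compact_entry R n _ (HZcpt r)).
have HXb : forall y, prodset blk Z y -> forall i, `|y ord0 i| <= Mf (blk i).
  move=> y Hy i; have := HMf _ _ (Hy (blk i)) i; by rewrite blockcE eqxx.
have HD : forall r z1 z2, Z r z1 -> Z r z2 -> norm2 (z1 - z2) <= diam2 (Z r).
  move=> r; apply: (@diam_ge R n _ (Num.sqrt (\sum_(i < n) (2 * Mf r) ^+ 2))).
  move=> z1 z2 H1 H2; apply: norm2_entry => i; rewrite !mxE.
  apply: le_trans (ler_normB _ _) _.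
  have := HMf _ _ H1 i; have := HMf _ _ H2 i; lra.
have HDX : forall y1 y2, prodset blk Z y1 -> prodset blk Z y2 ->
    norm2 (y1 - y2) <= diam2 (prodset blk Z).
  apply: (@diam_ge R n _ (Num.sqrt (\sum_(i < n) (2 * Mf (blk i)) ^+ 2))).
  move=> z1 z2 H1 H2; apply: norm2_entry => i; rewrite !mxE.
  apply: le_trans (ler_normB _ _) _.
  have := HXb _ H1 i; have := HXb _ H2 i; lra.
have HBF : forall y r, prodset blk Z y -> norm2 (blockc blk r (F y)) <= BF blk (prodset blk Z) F.
  apply: (@BF_ge R n d blk _ F (Num.sqrt (2 * dotp (F (x 0%N)) (F (x 0%N)) + 2 * (L ^+ 2 *
     (\sum_(i < n) (2 * Mf (blk i)) ^+ 2))))).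
  apply: F_bounded => // y Hy.
  have Hent : forall i, `|(y - x 0%N) ord0 i| <= 2 * Mf (blk i).
    move=> i; rewrite !mxE; apply: le_trans (ler_normB _ _) _.
    have := HXb _ Hy i; have := HXb _ (HX0) i; lra.
  have := norm2_le_sq (@norm2_entry R n _ _ Hent).
  by rewrite sqr_sqrtr //; apply: sumr_ge0 => i _; exact: sqr_ge0.
have [xs HXs Hms] := Hm T x (fun t _ => HXx t).
set c := fun i : 'I_n => w (blk i) xs.
have hc : forall i, l <= c i <= h by move=> i; exact: Hwb.
have hc0 : forall i, 0 <= c i.
  by move=> i; have /andP [c1 _] := hc i; apply: le_trans c1; exact: ltW.
have hcr0 : forall r, 0 <= w r xs.
  by move=> r; have /andP [c1 _] := Hwb r xs HXs; apply: le_trans c1; exact: ltW.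
set G := fun t (i : 'I_n) => a (blk i) (x t) * F (x t) ord0 i.
set IP := fun t => \sum_i c i * (G t i * (x t ord0 i - xs ord0 i)).
set a2 := fun t => \sum_i c i * (x t ord0 i - xh t ord0 i) ^+ 2.
set b2 := fun t => \sum_i c i * (x t ord0 i - xh t.+1 ord0 i) ^+ 2.
set Psi := fun t => 2^-1 * \sum_i c i * (xh t ord0 i - xs ord0 i) ^+ 2
                    + 4^-1 * \sum_i c i * (x t.-1 ord0 i - xh t ord0 i) ^+ 2.
have Hst : forall t, (1 <= t)%N ->
    eta * IP t + 4^-1 * a2 t + 4^-1 * b2 t <= Psi t - Psi t.+1.
  case=> [//|s] _.
  have [Hp1 Hp2] := Hstep s.+1 isT.
  have V1 := @proj_VI_e R n d blk Z HZconv (fun r => w r xs) hcr0 a F eta _ _ _ _ Hp1 (HXh s.+2 isT).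
  have V2 := @proj_VI_e R n d blk Z HZconv (fun r => w r xs) hcr0 a F eta _ _ _ _ Hp2 HXs.
  have V3 := @proj_VI_e R n d blk Z HZconv (fun r => w r xs) hcr0 a F eta _ _ _ _ Hp2 (HXx s.+1).
  have NB := @Nbound R n d blk a F c (x s.+1) (x s) (xh s.+1) eta l h L alpha
     (BF blk (prodset blk Z) F) Hl h0 hc (fun r => Hab r _ (HXx s.+1))
     (fun r => Halip r _ _ (HXx s.+1) (HXx s)) (HF _ _ (HXx s.+1) (HXx s))
     (fun r => HBF _ r (HXx s)) Heta.
  exact: (@step_abs R n c eta (fun i => x s.+1 ord0 i) (fun i => xh s.+1 ord0 i)
     (fun i => xh s.+2 ord0 i) (fun i => xs ord0 i) (G s.+1) (G s) (fun i => x s ord0 i)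
     hc0 V1 V2 V3 NB).
have Tpos : (0 < T%:R :> R) by rewrite ltr0n.
have Hsum : \sum_(1 <= t < T.+1) (eta * IP t + 4^-1 * a2 t + 4^-1 * b2 t)
    <= Psi 1%N - Psi T.+1.
  have -> : Psi 1%N - Psi T.+1 = \sum_(1 <= t < T.+1) (Psi t - Psi t.+1).
    rewrite -opprB -(telescope_sumr _ (n := 1%N) (m := T.+1)) // -sumrN.
    by apply: eq_bigr => k _; rewrite opprB.
  by apply: ler_sum_nat => t /andP [t1 _]; exact: Hst.
have Psi0 : 0 <= Psi T.+1.
  apply: addr_ge0; apply: mulr_ge0 => //; apply: sumr_ge0 => i _;
    apply: mulr_ge0 => //; exact: sqr_ge0.
set DX := diam2 (prodset blk Z).
have Psi1 : Psi 1%N <= 2^-1 * (h * DX ^+ 2).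
  rewrite /Psi /= Hxh1.
  have -> : \sum_i c i * (x 0%N ord0 i - x 0%N ord0 i) ^+ 2 = 0.
    by apply: big1 => i _; rewrite subrr expr0n mulr0.
  rewrite mulr0 addr0; apply: ler_wpM2l => //.
  have H1 := norm2_le_sq (HDX _ _ HX0 HXs).
  apply: le_trans (_ : h * dotp (x 0%N - xs) (x 0%N - xs) <= _); last first.
    by apply: ler_wpM2l.
  rewrite /dotp mulr_sumr; apply: ler_sum => i _; rewrite !mxE -expr2.
  apply: ler_wpM2r; [exact: sqr_ge0|by have /andP [] := hc i].
have HIP : - (T%:R * gamma) <= \sum_(1 <= t < T.+1) IP t.
  have -> : \sum_(1 <= t < T.+1) IP t = \sum_(1 <= t < T.+1)
      dotp (x t - xs) (hprod (hprod (F (x t)) (blockfun blk a (x t))) (blockfun blk w xs)).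
    apply: eq_bigr => t _; rewrite /IP /dotp; apply: eq_bigr => i _.
    rewrite !mxE ?hprodE ?blockfunE /G /c; ring.
  move: Hms; set SS := \sum_(1 <= t < T.+1) _ => Hms.
  have : - gamma * T%:R <= T%:R^-1 * SS * T%:R by apply: ler_wpM2r => //; exact: ltW.
  rewrite mulrAC mulVf ?mul1r; last by rewrite lt0r_neq0.
  by move=> H; rewrite mulrC -mulNr.
have Hf : \sum_(1 <= t < T.+1) (a2 t + b2 t) <= 4 * (2^-1 * (h * DX ^+ 2)) + 4 * (eta * (T%:R * gamma)).
  have E : \sum_(1 <= t < T.+1) (eta * IP t + 4^-1 * a2 t + 4^-1 * b2 t) =
      eta * \sum_(1 <= t < T.+1) IP t + 4^-1 * \sum_(1 <= t < T.+1) (a2 t + b2 t).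
    rewrite !mulr_sumr -big_split /=; apply: eq_bigr => t _; ring.
  rewrite E in Hsum.
  have := ler_wpM2l (ltW Heta0) HIP.
  lra.
have [t0 Ht0 Hpig] := @pigeon R (fun t => a2 t + b2 t) T HT.
exists t0 => // z Hz.
have t01 : (1 <= t0)%N by case/andP: Ht0.
set S := 4 * eta * gamma / l + 2 * DX ^+ 2 * h / (l * T%:R).
have He : dotp (x t0 - xh t0) (x t0 - xh t0) + dotp (x t0 - xh t0.+1) (x t0 - xh t0.+1) <= S.
  have Hl1 : l * (dotp (x t0 - xh t0) (x t0 - xh t0) + dotp (x t0 - xh t0.+1) (x t0 - xh t0.+1))
      <= a2 t0 + b2 t0.
    rewrite /a2 /b2 /dotp mulrDr !mulr_sumr -!big_split /=; apply: ler_sum => i _.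
    rewrite !mxE -!expr2; apply: lerD; apply: ler_wpM2r; try exact: sqr_ge0;
      by have /andP [] := hc i.
  have HS : S * (l * T%:R) = 4 * (2^-1 * (h * DX ^+ 2)) + 4 * (eta * (T%:R * gamma)).
    by rewrite /S; field; rewrite !lt0r_neq0.
  have lT : 0 < l * T%:R by apply: mulr_gt0.
  rewrite -(ler_pM2r lT) HS.
  have := ler_wpM2r (ltW Tpos) Hl1.
  move: Hpig Hf; rewrite /=; nra.
have S0 : 0 <= S by apply: le_trans He; apply: addr_ge0; exact: dotp_ge0.
have [Hp1 Hp2] := Hstep t0 t01.
have GB := (@gap_bound R n d blk Z HZconv F a eta l h (BF blk (prodset blk Z) F)
   (\big[Num.max/0]_(r < d) diam2 (Z r)) S (x t0) (xh t0) (xh t0.+1) (fun r => diam2 (Z r))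
   Heta0 Hl (BF_ge0 _ _ _ _ _ _) (bigmax_ge0 _ _ _) S0
   (fun r => Hab r _ (HXx t0)) (fun r => HBF _ r (HXx t0)) HD
   ).
apply: GB => //; exact: (fun r => @bigmax_ge R _ (fun r => diam2 (Z r)) r).
Qed.
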